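(* Let $A=\bigoplus_{m\in\omega_M}A_m\chi^m$ be an effectively $M$-graded affine $\mathbf k$-algebra with weight cone $\omega$, and let $\partial_1,\partial_2$ be homogeneous locally nilpotent derivations of $A$ of degrees $e_1,e_2\in M$ respectively (of arbitrary, not necessarily fiber, type). If the line $\{te_1+(1-t)e_2 : t\in\mathbb Q\}\subseteq M_{\mathbb Q}$ does not intersect the weight cone $\omega$, then $\partial_1+\partial_2$ is locally nilpotent.
   Context: $\mathbf k$ is an algebraically closed field of characteristic zero, $M$ a lattice, $M_{\mathbb Q}=M\otimes\mathbb Q$; $A$ is a finitely generated commutative $\mathbf k$-domain with an effective $M$-grading; the weight cone $\omega\subseteq M_{\mathbb Q}$ is the cone spanned by $\{m\in M:A_m\neq0\}$ and $\omega_M=\omega\cap M$. A derivation $\partial$ is homogeneous of degree $e$ if it maps the degree-$m$ component into the degree-$(m+e)$ component for all $m$; it is locally nilpotent if every element is killed by some power of $\partial$. *)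

(* Defs.v *)
From HB Require Import structures.
From mathcomp Require Import all_boot all_order all_algebra all_field.
Set Implicit Arguments. Unset Strict Implicit. Unset Printing Implicit Defensive.
Import Order.TTheory GRing.Theory Num.Theory.
Local Open Scope ring_scope.

(* The lattice M is modelled as Z^n = 'rV[int]_n, and M_Q as 'rV[rat]_n. *)
Definition lat (n : nat) := 'rV[int]_n.
Definition toQ (n : nat) (m : 'rV[int]_n) : 'rV[rat]_n := map_mx intr m.

(* A grading of A by M: a family of k-subspaces Ag m (membership predicates). *)
Definition is_subspace (k : fieldType) (A : lmodType k) (S : A -> Prop) :=
  S 0 /\ forall (c : k) (a b : A), S a -> S b -> S (c *: a + b).

Definition is_M_grading (k : fieldType) (A : comAlgType k) (n : nat)
    (Ag : 'rV[int]_n -> A -> Prop) : Prop :=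
  [/\ (forall m, is_subspace (Ag m)),
      (forall a : A, exists (s : seq 'rV[int]_n) (f : 'rV[int]_n -> A),
          (forall m, m \in s -> Ag m (f m)) /\ a = \sum_(m <- s) f m),
      (forall (s : seq 'rV[int]_n) (f : 'rV[int]_n -> A),
          uniq s -> (forall m, m \in s -> Ag m (f m)) ->
          \sum_(m <- s) f m = 0 -> forall m, m \in s -> f m = 0) &
      (forall m m' a b, Ag m a -> Ag m' b -> Ag (m + m') (a * b))].

Definition is_weight (k : fieldType) (A : comAlgType k) (n : nat)
    (Ag : 'rV[int]_n -> A -> Prop) (m : 'rV[int]_n) : Prop :=
  exists a : A, Ag m a /\ a <> 0.

Definition effective_grading (k : fieldType) (A : comAlgType k) (n : nat)
    (Ag : 'rV[int]_n -> A -> Prop) : Prop :=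
  forall x : 'rV[int]_n, exists (s : seq 'rV[int]_n) (c : 'rV[int]_n -> int),
    (forall m, m \in s -> is_weight Ag m) /\ x = \sum_(m <- s) c m *: m.

Definition in_weight_cone (k : fieldType) (A : comAlgType k) (n : nat)
    (Ag : 'rV[int]_n -> A -> Prop) (x : 'rV[rat]_n) : Prop :=
  exists (s : seq 'rV[int]_n) (c : 'rV[int]_n -> rat),
    (forall m, m \in s -> is_weight Ag m /\ 0 <= c m) /\
    x = \sum_(m <- s) c m *: toQ m.

Definition is_subalgebra (k : fieldType) (A : comAlgType k) (S : A -> Prop) :=
  [/\ S 1, (forall (c : k) a, S a -> S (c *: a)),
      (forall a b, S a -> S b -> S (a + b)) &
      (forall a b, S a -> S b -> S (a * b))].

Definition finitely_generated (k : fieldType) (A : comAlgType k) : Prop :=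
  exists gens : seq A, forall S : A -> Prop, is_subalgebra S ->
    (forall g, g \in gens -> S g) -> forall a, S a.

Definition is_domain (R : comNzRingType) : Prop :=
  forall a b : R, a * b = 0 -> a = 0 \/ b = 0.

Definition is_derivation (k : fieldType) (A : comAlgType k) (d : A -> A) :=
  (forall (c : k) a b, d (c *: a + b) = c *: d a + d b) /\
  (forall a b, d (a * b) = a * d b + d a * b).

Definition homogeneous_of_degree (k : fieldType) (A : comAlgType k) (n : nat)
    (Ag : 'rV[int]_n -> A -> Prop) (d : A -> A) (e : 'rV[int]_n) : Prop :=
  forall m a, Ag m a -> Ag (m + e) (d a).

Definition locally_nilpotent (R : zmodType) (d : R -> R) : Prop :=
  forall a, exists N : nat, iter N d a = 0.

(* Main.v *)
From Stdlib Require Import Classical.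
Require Import Defs.
From HB Require Import structures.
From mathcomp Require Import all_boot all_order all_algebra all_field.
From mathcomp Require Import ring lra.

Import Order.TTheory GRing.Theory Num.Theory.
Local Open Scope ring_scope.

Section Dot.
Variable n : nat.
Implicit Types u v w : 'rV[rat]_n.

Definition dot u v : rat := \sum_(i < n) u 0 i * v 0 i.

Lemma dotDr u v w : dot u (v + w) = dot u v + dot u w.
Proof. rewrite /dot -big_split /=; apply: eq_bigr => i _; rewrite !mxE; ring. Qed.
Lemma dotBr u v w : dot u (v - w) = dot u v - dot u w.
Proof. rewrite /dot -sumrB; apply: eq_bigr => i _; rewrite !mxE; ring. Qed.
Lemma dotZr u c v : dot u (c *: v) = c * dot u v.
Proof. rewrite /dot mulr_sumr; apply: eq_bigr => i _; rewrite !mxE; ring. Qed.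
Lemma dotDl u v w : dot (v + w) u = dot v u + dot w u.
Proof. rewrite /dot -big_split /=; apply: eq_bigr => i _; rewrite !mxE; ring. Qed.
Lemma dotBl u v w : dot (v - w) u = dot v u - dot w u.
Proof. rewrite /dot -sumrB; apply: eq_bigr => i _; rewrite !mxE; ring. Qed.
Lemma dotZl u c v : dot (c *: v) u = c * dot v u.
Proof. rewrite /dot mulr_sumr; apply: eq_bigr => i _; rewrite !mxE; ring. Qed.
Lemma dotNl u v : dot (- v) u = - dot v u.
Proof. rewrite /dot -sumrN; apply: eq_bigr => i _; rewrite !mxE; ring. Qed.
Lemma dotNr u v : dot u (- v) = - dot u v.
Proof. rewrite /dot -sumrN; apply: eq_bigr => i _; rewrite !mxE; ring. Qed.
Lemma dot0r u : dot u 0 = 0.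
Proof. rewrite /dot big1 // => i _; rewrite !mxE; ring. Qed.

Lemma dot_gt0 v : v != 0 -> 0 < dot v v.
Proof.
move=> hv; rewrite lt0r; apply/andP; split; last first.
  by apply: sumr_ge0 => i _; rewrite -expr2 sqr_ge0.
apply: contra hv => /eqP h; apply/eqP/rowP => j; rewrite mxE.
have H := (psumr_eq0P (P := predT) (F := fun i => v 0 i * v 0 i)).
have /eqP := H (fun i _ => (ltac:(by rewrite -expr2 sqr_ge0))) h j isT.
by rewrite mulf_eq0 orbb => /eqP.
Qed.

Definition incone (s : seq 'rV[rat]_n) x :=
  exists l : seq (rat * 'rV[rat]_n),
    (forall p, p \in l -> 0 <= p.1 /\ p.2 \in s) /\ x = \sum_(p <- l) p.1 *: p.2.

Lemma dot_sum y (l : seq (rat * 'rV[rat]_n)) :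
  dot y (\sum_(p <- l) p.1 *: p.2) = \sum_(p <- l) p.1 * dot y p.2.
Proof.
elim: l => [|p l IH]; first by rewrite !big_nil dot0r.
by rewrite !big_cons dotDr dotZr IH.
Qed.

Lemma incone_pull (T : eqType) (g : T -> 'rV[rat]_n) (s : seq T) x :
  incone (map g s) x -> exists l : seq (rat * T),
    (forall p, p \in l -> 0 <= p.1 /\ p.2 \in s) /\ x = \sum_(p <- l) p.1 *: g p.2.
Proof.
move=> [l [Hl Hx]]; subst x; elim: l Hl => [|p l IH] Hl.
  by exists [::]; split=> //; rewrite !big_nil.
rewrite big_cons; have [|l' [Hl' ->]] := IH.
  by move=> q hq; apply: Hl; rewrite in_cons hq orbT.
have [hp1 /mapP [t ht ->]] := Hl p (mem_head _ _).
exists ((p.1, t) :: l'); split.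
  by move=> q; rewrite in_cons => /orP [/eqP -> | /Hl'].
by rewrite big_cons.
Qed.

Lemma farkas (s : seq 'rV[rat]_n) b : ~ incone s b ->
  exists y, (forall w, w \in s -> 0 <= dot y w) /\ dot y b < 0.
Proof.
have [k Hk] : exists k, (size s <= k)%N by exists (size s).
elim: k s b Hk => [|k IH] [|a s] b //= Hk Hnot.
- exists (- b); split=> // ; rewrite dotNl oppr_lt0 dot_gt0 //.
  by apply/eqP => hb; apply: Hnot; exists [::]; rewrite big_nil.
- exists (- b); split=> // ; rewrite dotNl oppr_lt0 dot_gt0 //.
  by apply/eqP => hb; apply: Hnot; exists [::]; rewrite big_nil.
have [y [Hy Hyb]] : exists y, (forall w, w \in s -> 0 <= dot y w) /\ dot y b < 0.
  apply: IH => // -[l [Hl Hb]]; apply: Hnot; exists l; split=> // p hp; have [h1 h2] := Hl p hp.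
  by split=> //; rewrite in_cons; apply/orP; right.
case: (lerP 0 (dot y a)) => hya.
  exists y; split=> // w; rewrite in_cons => /orP [/eqP -> // | /Hy //].
pose g w := dot y w *: a - dot y a *: w.
pose b' := dot y b *: a - dot y a *: b.
have [z [Hz Hzb]] : exists z, (forall w, w \in map g s -> 0 <= dot z w) /\ dot z b' < 0.
  apply: IH; first by rewrite size_map.
  move=> /incone_pull [l [Hl Hb']]; apply: Hnot.
  pose S := \sum_(p <- l) p.1 * dot y p.2.
  pose V := \sum_(p <- l) p.1 *: p.2.
  have HS : 0 <= S.
    rewrite /S big_seq; apply: sumr_ge0 => p hp; have [h1 h2] := Hl p hp; apply: mulr_ge0 => //; exact: Hy.
  have E : forall l0 : seq (rat * 'rV[rat]_n), \sum_(p <- l0) p.1 *: g p.2 =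
     (\sum_(p <- l0) p.1 * dot y p.2) *: a - dot y a *: \sum_(p <- l0) p.1 *: p.2.
    elim=> [|p l0 IHl].
      by rewrite !big_nil scale0r scaler0 subr0.
    rewrite !big_cons IHl /g; apply/rowP => j; rewrite !mxE; ring.
  rewrite E -/S -/V in Hb'.
  have hya0 : dot y a != 0 by rewrite ltr0_neq0.
  exists (((dot y b - S) / dot y a, a) :: l); split.
    move=> p; rewrite in_cons => /orP [/eqP -> /= | hp]; last first.
      have [? ?] := Hl p hp.
      by split=> //; rewrite in_cons orbC; apply/orP; left.
      split; last exact: mem_head.
      rewrite -mulrNN -invrN; apply: divr_ge0; lra.
  rewrite big_cons /=; apply/rowP => j.
  have := congr1 (fun M : 'rV[rat]_n => M 0 j) Hb'; rewrite /b' => /= Hj.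
  rewrite !mxE in Hj; rewrite -/V !mxE.
  have -> : b 0 j = (dot y b * a 0 j - (dot y b * a 0 j - dot y a * b 0 j)) / dot y a.
    by field.
  rewrite Hj; field.
  exact: hya0.
exists (dot z a *: y - dot y a *: z); split.
  move=> w; rewrite in_cons => /orP [/eqP -> | hw].
    by rewrite dotBl !dotZl mulrC subrr.
  have := Hz (g w) (map_f _ hw); rewrite /g dotBr !dotZr dotBl !dotZl.
  by rewrite [dot y w * _]mulrC.
move: Hzb; rewrite /b' dotBr !dotZr dotBl !dotZl.
by rewrite [dot y b * _]mulrC.
Qed.

End Dot.
Arguments dot {n}.
Arguments incone {n}.

Lemma group_sum (K : eqType) (V W : zmodType) (P : K -> V -> Prop) (F : K -> V -> W) :
  (forall m x y, P m x -> P m y -> P m (x + y)) ->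
  (forall m x y, F m (x + y) = F m x + F m y) ->
  forall l : seq (K * V), (forall p, p \in l -> P p.1 p.2) ->
  exists s (f : K -> V), [/\ uniq s,
     (forall m, m \in s -> P m (f m) /\ m \in map fst l) &
     \sum_(m <- s) F m (f m) = \sum_(p <- l) F p.1 p.2].
Proof.
move=> HP HF; elim=> [|p l IH] Hl.
  by exists [::], (fun _ => 0); split=> //; rewrite !big_nil.
have [|s [f [Hu Hs Hsum]]] := IH.
  by move=> q hq; apply: Hl; rewrite in_cons hq orbT.
have hp := Hl p (mem_head _ _).
case: (boolP (p.1 \in s)) => hin.
  exists s, (fun m => if m == p.1 then p.2 + f m else f m); split=> //.
    move=> m hm; have [h1 h2] := Hs m hm; split; last by rewrite /= in_cons h2 orbT.
    by case: eqP => [-> | _] //; apply: HP => //; exact: (Hs _ hin).1.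
  rewrite (bigD1_seq p.1) //= eqxx HF big_cons -Hsum (bigD1_seq p.1 hin Hu) /=.
  rewrite -addrA; congr (_ + (_ + _)); apply: eq_bigr => m /negbTE -> //.
exists (p.1 :: s), (fun m => if m == p.1 then p.2 else f m); split.
- by rewrite cons_uniq hin Hu.
- move=> m; rewrite in_cons => /orP [/eqP -> | hm]; first by rewrite eqxx /= mem_head.
  have [h1 h2] := Hs m hm; have -> : (m == p.1) = false.
    by apply/negbTE; apply: contraNneq hin => <-.
  by split=> //; rewrite /= in_cons h2 orbT.
- rewrite !big_cons eqxx -Hsum; congr (_ + _); apply: eq_big_seq => m hm.
  have -> // : (m == p.1) = false.
  by apply/negbTE; apply: contraNneq hin => <-.
Qed.

Lemma toQD n (a b : 'rV[int]_n) : toQ (a + b) = toQ a + toQ b.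
Proof. by apply/rowP => j; rewrite !mxE intrD. Qed.

Lemma le_sumabs (T : eqType) (s : seq T) (g : T -> rat) m :
  m \in s -> g m <= \sum_(x <- s) `|g x|.
Proof.
elim: s => [|x s IH] //; rewrite in_cons big_cons => /orP [/eqP -> | hm].
  apply: le_trans (ler_norm _) _; rewrite lerDl; exact: sumr_ge0.
apply: le_trans (IH hm) _; rewrite lerDr; exact: normr_ge0.
Qed.

Section Alg.
Variables (k : fieldType) (A : comAlgType k) (n : nat).
Variable Ag : 'rV[int]_n -> A -> Prop.
Hypothesis hgr : is_M_grading Ag.

Lemma Ag0 m : Ag m 0.
Proof. by case: hgr => H _ _ _; case: (H m). Qed.
Lemma AgD m x y : Ag m x -> Ag m y -> Ag m (x + y).
Proof. by case: hgr => H _ _ _ hx hy; case: (H m) => _ h; rewrite -[x]scale1r; apply: h. Qed.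
Lemma AgZ m c x : Ag m x -> Ag m (c *: x).
Proof.
by case: hgr => H _ _ _ hx; case: (H m) => h0 h; rewrite -[c *: x]addr0; apply: h.
Qed.
Lemma AgN m x : Ag m x -> Ag m (- x).
Proof. by move=> hx; rewrite -scaleN1r; apply: AgZ. Qed.

Lemma notweight m x : ~ is_weight Ag m -> Ag m x -> x = 0.
Proof.
move=> hw hx; case: (classic (x = 0)) => // hne; exfalso; apply: hw; by exists x.
Qed.

Lemma decomp_list (L : seq A) : exists Wint : seq 'rV[int]_n,
  (forall m, m \in Wint -> is_weight Ag m) /\
  forall x, x \in L -> exists l : seq ('rV[int]_n * A),
    (forall p, p \in l -> Ag p.1 p.2 /\ p.1 \in Wint) /\ x = \sum_(p <- l) p.2.
Proof.
elim: L => [|x L [W0 [HW0 HL]]]; first by exists [::].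
case: hgr => _ Hdec _ _.
have [s [f [Hf Hx]]] := Hdec x.
pose Wx := [seq m <- s | f m != 0].
exists (Wx ++ W0); split.
  move=> m; rewrite mem_cat => /orP [| /HW0 //].
  by rewrite mem_filter => /andP [hfm hm]; exists (f m); split; [apply: Hf | apply/eqP].
move=> y; rewrite in_cons => /orP [/eqP -> | hy].
  exists [seq (m, f m) | m <- Wx]; split.
    move=> p /mapP [m hm ->] /=; move: hm; rewrite mem_filter => /andP [hfm hm'].
    split; first exact: Hf.
    by rewrite mem_cat mem_filter hfm hm'.
  rewrite big_map big_filter Hx [RHS]big_mkcond; apply: eq_bigr => m _ /=.
  by case: eqP => [->|].
have [l [Hl ->]] := HL y hy; exists l; split=> // p hp.
by have [h1 h2] := Hl p hp; split=> //; rewrite mem_cat h2 orbT.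
Qed.

Lemma weights_in_cone : finitely_generated A -> exists Wint : seq 'rV[int]_n,
  (forall m, m \in Wint -> is_weight Ag m) /\
  forall m, is_weight Ag m -> incone (map (@toQ n) Wint) (toQ m).
Proof.
move=> [gens Hgens].
have [Wint [HW HL]] := decomp_list (1 :: gens).
exists Wint; split=> //.
pose inc := incone (map (@toQ n) Wint).
have inc0 : inc 0 by exists [::]; rewrite big_nil.
have incD x y : inc x -> inc y -> inc (x + y).
  move=> [l1 [H1 ->]] [l2 [H2 ->]]; exists (l1 ++ l2); split; last by rewrite big_cat.
  by move=> p; rewrite mem_cat => /orP [/H1 | /H2].
have incW m : m \in Wint -> inc (toQ m).
  move=> hm; exists [:: (1, toQ m)]; split.
    by move=> p; rewrite inE => /eqP -> /=; split=> //; apply: map_f.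
  by rewrite big_cons big_nil scale1r addr0.
pose S (a : A) := exists l : seq ('rV[int]_n * A),
  (forall p, p \in l -> Ag p.1 p.2 /\ inc (toQ p.1)) /\ a = \sum_(p <- l) p.2.
have SL x : x \in 1 :: gens -> S x.
  move=> /HL [l [Hl ->]]; exists l; split=> // p hp.
  by have [h1 h2] := Hl p hp; split=> //; apply: incW.
have Ssub : is_subalgebra S.
  split.
  - by apply: SL; exact: mem_head.
  - move=> c a [l [Hl ->]]; exists [seq (p.1, c *: p.2) | p <- l]; split.
      move=> q /mapP [p hp ->] /=; have [h1 h2] := Hl p hp.
      by split=> //; apply: AgZ.
    by rewrite big_map scaler_sumr.
  - move=> a b [l1 [H1 ->]] [l2 [H2 ->]]; exists (l1 ++ l2); split; last by rewrite big_cat.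
    by move=> p; rewrite mem_cat => /orP [/H1 | /H2].
  - move=> a b [l1 [H1 ->]] [l2 [H2 ->]].
    exists [seq (p.1 + q.1, p.2 * q.2) | p <- l1, q <- l2]; split.
      move=> r /allpairsP [[p q] [hp hq ->]] /=.
      have [h1 h2] := H1 p hp; have [h3 h4] := H2 q hq.
      split; first by case: hgr => _ _ _ HM; apply: HM.
      by rewrite toQD; apply: incD.
    rewrite big_allpairs_dep mulr_suml; apply: eq_bigr => p _.
    by rewrite mulr_sumr; apply: eq_bigr.
have Sall a : S a.
  apply: Hgens => // g hg; apply: SL; by rewrite in_cons hg orbT.
move=> m0 [a [ha ha0]].
case: (classic (inc (toQ m0))) => // hnot; exfalso; apply: ha0.
have [l [Hl Ha]] := Sall a.
have HPc : forall m x y, Ag m x /\ inc (toQ m) -> Ag m y /\ inc (toQ m) ->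
    Ag m (x + y) /\ inc (toQ m).
  by move=> m x y [h1 h2] [h3 h4]; split=> //; apply: AgD.
have [s [f [Hu Hs Hsum]]] := @group_sum _ A A (fun m x => Ag m x /\ inc (toQ m))
   (fun _ x => x) HPc (fun _ _ _ => erefl) l Hl.
have hm0 : m0 \notin s.
  by apply/negP => /Hs [[_ h] _].
case: hgr => _ _ Hdir _.
have := Hdir (m0 :: s) (fun m => if m == m0 then - a else f m).
move=> /(_ _ _ _ m0 (mem_head _ _)); rewrite eqxx => h; rewrite -[a]opprK h ?oppr0 //.
- by rewrite cons_uniq hm0 Hu.
- move=> m; rewrite in_cons => /orP [/eqP -> | hm]; first by rewrite eqxx; apply: AgN.
  have -> : (m == m0) = false by apply/negbTE; apply: contraNneq hm0 => <-.
  exact: (Hs m hm).1.1.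
have E : \sum_(m <- s) (if m == m0 then - a else f m) = \sum_(m <- s) f m.
  apply: eq_big_seq => m hm.
  by have -> : (m == m0) = false by apply/negbTE; apply: contraNneq hm0 => <-.
by rewrite big_cons eqxx E Hsum -Ha addNr.
Qed.

End Alg.

Lemma der_add (k : fieldType) (A : comAlgType k) (d : A -> A) :
  is_derivation d -> (forall x y, d (x + y) = d x + d y) /\ d 0 = 0.
Proof.
move=> [hD _].
have dD : forall x y, d (x + y) = d x + d y.
  by move=> x y; have := hD 1 x y; rewrite !scale1r.
split=> //; have h := dD 0 0; rewrite addr0 -{1}[d 0]addr0 in h.
exact: esym (addrI _ h).
Qed.

Lemma der_sum (k : fieldType) (A : comAlgType k) (d : A -> A) (T : Type)
  (l : seq T) (G : T -> A) :
  is_derivation d -> d (\sum_(p <- l) G p) = \sum_(p <- l) d (G p).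
Proof.
move=> /der_add [dD d0]; elim: l => [|p l IH]; first by rewrite !big_nil.
by rewrite !big_cons dD IH.
Qed.

Theorem proposition6p3 (k : closedFieldType) (hchar : [pchar k] =i pred0)
    (A : comAlgType k) (n : nat) (Ag : 'rV[int]_n -> A -> Prop)
    (hfg : finitely_generated A) (hdom : is_domain A)
    (hgr : is_M_grading Ag) (heff : effective_grading Ag)
    (d1 d2 : A -> A) (e1 e2 : 'rV[int]_n)
    (hd1 : is_derivation d1) (hd2 : is_derivation d2)
    (hh1 : homogeneous_of_degree Ag d1 e1) (hh2 : homogeneous_of_degree Ag d2 e2)
    (hl1 : locally_nilpotent d1) (hl2 : locally_nilpotent d2)
    (hline : forall t : rat, ~ in_weight_cone Ag (t *: toQ e1 + (1 - t) *: toQ e2)) :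
  locally_nilpotent (fun a => d1 a + d2 a).
Proof.
have [Wint [HW Hcone]] := @weights_in_cone _ _ _ Ag hgr hfg.
pose WQ := map (@toQ n) Wint.
have toIWC : forall x, incone WQ x -> in_weight_cone Ag x.
  move=> x /incone_pull [l [Hl Hx]].
  have HPc : forall (m : 'rV[int]_n) (x y : rat), 0 <= x -> 0 <= y -> 0 <= x + y.
    by move=> m x0 y0 h1 h2; apply: addr_ge0.
  have HFc : forall (m : 'rV[int]_n) (x y : rat), (x + y) *: toQ m = x *: toQ m + y *: toQ m.
    by move=> m x0 y0; rewrite scalerDl.
  have Hl' : forall p, p \in [seq (q.2, q.1) | q <- l] -> 0 <= p.2.
    by move=> p /mapP [q hq ->] /=; have [] := Hl q hq.
  have [s [f [Hu Hs Hsum]]] := @group_sum _ rat _ (fun _ c => 0 <= c)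
    (fun m c => c *: toQ m) HPc HFc _ Hl'.
  exists s, f; split; last by rewrite Hx Hsum big_map.
  move=> m hm; have [h1 h2] := Hs m hm; split=> //; apply: HW.
  by move: h2; rewrite -map_comp => /mapP [q hq ->] /=; have [] := Hl q hq.
pose f := toQ e1 - toQ e2.
have Hnc : ~ incone [:: f, - f & WQ] (toQ e2).
  move=> [l [Hl Hb]].
  have [t' [l' [Hl' Hs]]] : exists t' (l' : seq (rat * 'rV[rat]_n)),
      (forall p, p \in l' -> 0 <= p.1 /\ p.2 \in WQ) /\
      \sum_(p <- l) p.1 *: p.2 = t' *: f + \sum_(p <- l') p.1 *: p.2.
    elim: l {Hb} Hl => [|p l IH] Hl.
      by exists 0, [::]; split=> //; rewrite !big_nil scale0r addr0.
    have [|t' [l' [Hl' Hs]]] := IH.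
      by move=> q hq; apply: Hl; rewrite in_cons hq orbT.
    have [hp1 hp2] := Hl p (mem_head _ _).
    move: hp2; rewrite !in_cons => /orP [/eqP hpf | /orP [/eqP hpf | hpW]].
    + exists (p.1 + t'), l'; split=> //; rewrite big_cons Hs hpf.
      by apply/rowP => j; rewrite !mxE; ring.
    + exists (t' - p.1), l'; split=> //; rewrite big_cons Hs hpf.
      by apply/rowP => j; rewrite !mxE; ring.
    + exists t', (p :: l'); split.
        by move=> q; rewrite in_cons => /orP [/eqP -> | /Hl'].
      rewrite !big_cons Hs; apply/rowP => j; rewrite !mxE; ring.
  apply: (hline (- t')); apply: toIWC.
  have -> : - t' *: toQ e1 + (1 - - t') *: toQ e2 = \sum_(p <- l') p.1 *: p.2.
    apply/rowP => j; have := congr1 (fun M : 'rV[rat]_n => M 0 j) (etrans Hb Hs).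
    rewrite /f !mxE => H.
    rewrite -[X in _ = X](addKr (t' * ((e1 0 j)%:~R - (e2 0 j)%:~R))) -H; ring.
  by exists l'.
have [y [Hy Hyb]] := @farkas n _ _ Hnc.
pose c := dot y (toQ e2).
have hyf : dot y f = 0.
  have h1 := Hy f (mem_head _ _).
  have h2 := Hy (- f) (ltac:(by rewrite !in_cons eqxx orbT)).
  rewrite dotNr in h2; lra.
have hc1 : dot y (toQ e1) = c.
  by move: hyf; rewrite /f dotBr => /eqP; rewrite subr_eq0 => /eqP.
pose val m := dot y (toQ m).
have valW : forall m, is_weight Ag m -> 0 <= val m.
  move=> m /Hcone [l [Hl Hm]]; rewrite /val Hm dot_sum big_seq; apply: sumr_ge0 => p hp.
  have [h1 h2] := Hl p hp; apply: mulr_ge0 => //; apply: Hy.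
  by rewrite !in_cons h2 !orbT.
have valD : forall m e, val (m + e) = val m + val e.
  by move=> m e; rewrite /val toQD dotDr.
have [dD1 d01] := @der_add _ _ _ hd1.
have [dD2 d02] := @der_add _ _ _ hd2.
move=> a.
case: hgr => _ Hdec _ _.
have [s [g [Hg Ha]]] := Hdec a.
pose q := \sum_(m <- s) `|val m|.
have hq0 : 0 <= q by apply: sumr_ge0 => m _; exact: normr_ge0.
have hcpos : 0 < - c by rewrite oppr_gt0.
pose N := Num.bound (q / - c).
exists N.
pose T (N : nat) (z : A) := exists l : seq ('rV[int]_n * A),
  (forall p, p \in l -> Ag p.1 p.2 /\ val p.1 <= q + N%:R * c) /\ z = \sum_(p <- l) p.2.
have HT : forall N, T N (iter N (fun a => d1 a + d2 a) a).
  elim=> [|N' [l [Hl Hz]]].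
    exists [seq (m, g m) | m <- s]; split; last by rewrite big_map.
    move=> p /mapP [m hm ->] /=; split; first exact: Hg.
    by rewrite mul0r addr0; apply: le_sumabs.
  exists ([seq (p.1 + e1, d1 p.2) | p <- l] ++ [seq (p.1 + e2, d2 p.2) | p <- l]).
  split.
    have hN : q + N'.+1%:R * c = q + N'%:R * c + c by rewrite -natr1 mulrDl mul1r addrA.
    move=> r; rewrite mem_cat => /orP [] /mapP [p hp ->] /=; have [h1 h2] := Hl p hp.
      by split; [apply: hh1 | rewrite valD /val hc1 -/(val p.1) hN lerD2r].
    by split; [apply: hh2 | rewrite valD /val -/c -/(val p.1) hN lerD2r].
  rewrite iterS Hz (@der_sum _ _ _ _ _ _ hd1) (@der_sum _ _ _ _ _ _ hd2) big_cat !big_map.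
  done.
have [l [Hl ->]] := HT N.
rewrite big_seq big1 // => p hp; have [h1 h2] := Hl p hp.
apply: (@notweight _ _ _ Ag _ _ ^~ h1) => /valW hv.
have : q + N%:R * c < 0.
  have := archi_boundP (divr_ge0 hq0 (ltW hcpos)); rewrite -/N ltr_pdivrMr //.
  by rewrite mulrN; lra.
lra.
Qed.
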